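(* Let $\mathbf{u}$ be quasi-definite with SMOP $(P_n)$ satisfying $xP_n=P_{n+1}+b_nP_n+a_nP_{n-1}$, and suppose $\mathbf{u}^{-1}$ is quasi-definite with SMOP $(P^-_n)$. Let $J^{(1)}$ and $J^-$ be the monic Jacobi matrices of $\mathbf{u}^{(1)}$ and $\mathbf{u}^{-1}$. Define $\alpha_{1,0}=b_0+b_1$ and, for $n\ge2$, $$\alpha_{n,n-1}=-\frac{W(P_{n+1},P_{n-1})(0)}{W(P_n,P_{n-1})(0)},\qquad \alpha_{n,n-2}=\frac{W(P_{n+1},P_n)(0)}{W(P_n,P_{n-1})(0)},$$ and for $n\ge0$ $$\beta_{n,n}=\frac{W(P^-_{n+1},P^-_{n+2})(0)}{W(P^-_n,P^-_{n+1})(0)},\qquad \beta_{n,n+1}=-\frac{W(P^-_n,P^-_{n+2})(0)}{W(P^-_n,P^-_{n+1})(0)}$$ (all denominators are nonzero). Let $L$ be the lower triangular matrix with $L_{n,n}=1$, $L_{n,n-1}=\alpha_{n,n-1}$, $L_{n,n-2}=\alpha_{n,n-2}$, other entries $0$, and $U$ the upper triangular matrix with $U_{n,n}=\beta_{n,n}$, $U_{n,n+1}=\beta_{n,n+1}$, $U_{n,n+2}=1$, other entries $0$. Then $P^-_n=P^{(1)}_n+\alpha_{n,n-1}P^{(1)}_{n-1}+\alpha_{n,n-2}P^{(1)}_{n-2}$, $x^2P^{(1)}_n=P^-_{n+2}+\beta_{n,n+1}P^-_{n+1}+\beta_{n,n}P^-_n$, and $$\big(J^{(1)}\big)^2=UL,\qquad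 \big(J^-\big)^2=LU.$$
   Context: Linear functionals on complex polynomials, moments $\mathbf{u}_n$; the inverse $\mathbf{u}^{-1}$ is the functional with $\sum_{k=0}^n\mathbf{u}_k(\mathbf{u}^{-1})_{n-k}=\delta_{n,0}$. Quasi-definite: all leading principal Hankel minors of the moments nonzero; then a unique sequence of monic orthogonal polynomials (SMOP) exists with $xP_n=P_{n+1}+b_nP_n+a_nP_{n-1}$, $P_{-1}=0$, $P_0=1$, $a_n\ne0$. $\mathbf{u}^{(1)}$ denotes a (quasi-definite) functional whose SMOP is the sequence of associated polynomials of the first kind: monic, $xP^{(1)}_n=P^{(1)}_{n+1}+b_{n+1}P^{(1)}_n+a_{n+1}P^{(1)}_{n-1}$, $P^{(1)}_{-1}=0$, $P^{(1)}_0=1$ (with convention $P^{(1)}_{-1}=0$ in the expansions). The monic Jacobi matrix of a functional is the tridiagonal matrix with diagonal $(b_0,b_1,\dots)$, superdiagonal $1$'s and subdiagonal $(a_1,a_2,\dots)$ of its SMOP recurrence. Wronskian $W(p,q)(x)=p(x)q'(x)-p'(x)q(x)$. *)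

(* Defs.v *)
From HB Require Import structures.
From mathcomp Require Import all_boot all_order all_algebra.
From mathcomp Require Import complex.
From mathcomp Require Import Rstruct.
Set Implicit Arguments. Unset Strict Implicit. Unset Printing Implicit Defensive.
Import Order.TTheory GRing.Theory Num.Theory.
Local Open Scope ring_scope.

Definition C : Type := (Rdefinitions.R)[i].

(* A linear functional on C[x] is given by its moments u_n = <u, x^n>. *)
Definition moments := nat -> C.

Definition fapp (u : moments) (p : {poly C}) : C :=
  \sum_(k < size p) p`_k * u k.

Definition is_inverse (u v : moments) : Prop :=
  forall n : nat, \sum_(k < n.+1) u k * v (n - k)%N = (n == 0%N)%:R.

Definition quasi_definite (u : moments) : Prop :=
  forall n : nat, \det (\matrix_(i < n.+1, j < n.+1) u (i + j)%N) != 0.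

Definition is_SMOP (u : moments) (P : nat -> {poly C}) : Prop :=
  [/\ forall n, P n \is monic,
      forall n, size (P n) = n.+1,
      forall n m, n != m -> fapp u (P n * P m) = 0
    & forall n, fapp u (P n * P n) != 0].

Definition TTRR (P : nat -> {poly C}) (a b : nat -> C) : Prop :=
  [/\ P 0%N = 1,
      'X * P 0%N = P 1%N + b 0%N *: P 0%N,
      forall n, 'X * P n.+1 = P n.+2 + b n.+1 *: P n.+1 + a n.+1 *: P n
    & forall n, a n.+1 != 0].

(* associated polynomials of the first kind:
   x P1_n = P1_{n+1} + b_{n+1} P1_n + a_{n+1} P1_{n-1}, P1_{-1}=0, P1_0=1 *)
Fixpoint assoc1_aux (a b : nat -> C) (n : nat) : {poly C} * {poly C} :=
  (* returns (P1_n, P1_{n+1}) *)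
  match n with
  | 0%N => (1, 'X - (b 1%N)%:P)
  | m.+1 => let (p, q) := assoc1_aux a b m in
            (q, ('X - (b m.+2)%:P) * q - a m.+2 *: p)
  end.
Definition assoc1 (a b : nat -> C) (n : nat) : {poly C} := (assoc1_aux a b n).1.

Definition wronsk (p q : {poly C}) : {poly C} := p * q^`() - p^`() * q.

Definition infmx := nat -> nat -> C.

Definition jacobi (c d : nat -> C) : infmx := fun i j =>
  if i == j then c i
  else if j == i.+1 then 1
  else if i == j.+1 then d i
  else 0.

(* C = A B as infinite matrices: for every (i,j) the series
   sum_k A_{i,k} B_{k,j} converges to C_{i,j}, i.e. (terms being eventually
   zero in our case) its partial sums are eventually equal to C_{i,j}. *)
Definition mxprod_is (A B M : infmx) : Prop :=
  forall i j, exists K, forall K', (K <= K')%N ->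
    \sum_(k < K') A i k * B k j = M i j.

Definition alpha1 (P : nat -> {poly C}) (b : nat -> C) (n : nat) : C :=
  match n with
  | 0%N => 0
  | 1%N => b 0%N + b 1%N
  | _ => - ((wronsk (P n.+1) (P n.-1)).[0] / (wronsk (P n) (P n.-1)).[0])
  end.
Definition alpha2 (P : nat -> {poly C}) (n : nat) : C :=
  match n with
  | 0%N | 1%N => 0
  | _ => (wronsk (P n.+1) (P n)).[0] / (wronsk (P n) (P n.-1)).[0]
  end.

Definition beta0 (Pm : nat -> {poly C}) (n : nat) : C :=
  (wronsk (Pm n.+1) (Pm n.+2)).[0] / (wronsk (Pm n) (Pm n.+1)).[0].
Definition beta1 (Pm : nat -> {poly C}) (n : nat) : C :=
  - ((wronsk (Pm n) (Pm n.+2)).[0] / (wronsk (Pm n) (Pm n.+1)).[0]).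

Definition Lmx (P : nat -> {poly C}) (b : nat -> C) : infmx := fun i j =>
  if i == j then 1
  else if i == j.+1 then alpha1 P b i
  else if i == j.+2 then alpha2 P i
  else 0.

Definition Umx (Pm : nat -> {poly C}) : infmx := fun i j =>
  if j == i then beta0 Pm i
  else if j == i.+1 then beta1 Pm i
  else if j == i.+2 then 1
  else 0.

(* Main.v *)
Require Import Defs.
From HB Require Import structures.
From mathcomp Require Import all_boot all_order all_algebra.
From mathcomp Require Import complex Rstruct.
From mathcomp Require Import ring zify.
Import Order.TTheory GRing.Theory Num.Theory.
Local Open Scope ring_scope.
Set Implicit Arguments. Unset Strict Implicit.

Lemma fappE (u : moments) (p : {poly C}) n : (size p <= n)%N ->
  fapp u p = \sum_(k < n) p`_k * u k.
Proof.
move=> h; rewrite /fapp (big_ord_widen n (fun k => p`_k * u k) h) big_mkcond /=.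
apply: eq_bigr => k _; case: ifP => // /negbT; rewrite -leqNgt => hk.
by rewrite nth_default // mul0r.
Qed.

Lemma fapp0 u : fapp u 0 = 0.
Proof. by rewrite /fapp size_poly0 big_ord0. Qed.

Lemma fapp1 u : fapp u 1 = u 0%N.
Proof. by rewrite /fapp size_poly1 big_ord1 coef1 mul1r. Qed.

Lemma fappD u p q : fapp u (p + q) = fapp u p + fapp u q.
Proof.
rewrite (@fappE u _ _ (size_polyD p q)).
rewrite (@fappE u p (maxn (size p) (size q)) (leq_maxl _ _)).
rewrite (@fappE u q (maxn (size p) (size q)) (leq_maxr _ _)).
by rewrite -big_split; apply: eq_bigr => k _; rewrite coefD mulrDl.
Qed.

Lemma fappZ u c p : fapp u (c *: p) = c * fapp u p.
Proof.
rewrite (@fappE u _ _ (size_scale_leq c p)) /fapp mulr_sumr.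
by apply: eq_bigr => k _; rewrite coefZ mulrA.
Qed.

Lemma fappN u p : fapp u (- p) = - fapp u p.
Proof. by rewrite -scaleN1r fappZ mulN1r. Qed.

Lemma fappB u p q : fapp u (p - q) = fapp u p - fapp u q.
Proof. by rewrite fappD fappN. Qed.

Lemma fapp_ext u w p : (forall n, u n = w n) -> fapp u p = fapp w p.
Proof. by move=> h; apply: eq_bigr => k _; rewrite h. Qed.

Lemma fappX u p : fapp u ('X * p) = fapp (fun n => u n.+1) p.
Proof.
have h : (size ('X * p)%R <= (size p).+1)%N.
  apply/leq_sizeP => j hj; rewrite coefXM; case: j hj => //= j hj.
  by rewrite nth_default.
rewrite (@fappE u _ _ h) big_ord_recl coefXM /= mul0r add0r /fapp.
by apply: eq_bigr => k _; rewrite coefXM.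
Qed.

Lemma fappXn u k p : fapp u ('X^k * p) = fapp (fun n => u (n + k)%N) p.
Proof.
elim: k u => [|k IH] u.
  by rewrite expr0 mul1r; apply: fapp_ext => n; rewrite addn0.
rewrite exprS -mulrA fappX IH; apply: fapp_ext => n; by rewrite addnS.
Qed.

Lemma fappXn1 u k : fapp u 'X^k = u k.
Proof. by rewrite -[X in fapp _ X]mulr1 fappXn fapp1. Qed.

Lemma mon_sz (p : {poly C}) k : (forall j, (k < j)%N -> p`_j = 0) -> p`_k = 1 ->
  size p = k.+1 /\ p \is monic.
Proof.
move=> h1 h2.
have hs : size p = k.+1.
  apply/eqP; rewrite eqn_leq; apply/andP; split.
    by apply/leq_sizeP => j hj; apply: h1.
  rewrite ltnNge; apply/negP => hle.
  by move: h2; rewrite nth_default // => /esym/eqP; rewrite oner_eq0.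
by split=> //; rewrite monicE lead_coefE hs /= h2.
Qed.

Lemma monic_top (B : {poly C}) k : B \is monic -> size B = k.+1 -> B`_k = 1.
Proof. by move=> hm hs; rewrite -(monicP hm) lead_coefE hs. Qed.

Lemma top_zero (B : {poly C}) k j : size B = k.+1 -> (k < j)%N -> B`_j = 0.
Proof. by move=> hs hj; rewrite nth_default // hs. Qed.

Lemma red_size (p B : {poly C}) k : (size p <= k.+1)%N -> B \is monic ->
  size B = k.+1 -> (size (p - p`_k *: B)%R <= k)%N.
Proof.
move=> hp hm hs; apply/leq_sizeP => j hj; rewrite coefB coefZ.
case: (ltngtP k j) => [hkj|hjk|e].
- by rewrite (top_zero hs hkj) mulr0 subr0 nth_default //; apply: leq_trans hp _.
- by move: hj; rewrite leqNgt hjk.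
- by subst j; rewrite (monic_top hm hs) mulr1 subrr.
Qed.

Lemma sub_monic (p q : {poly C}) k : p \is monic -> size p = k.+1 ->
  q \is monic -> size q = k.+1 -> (size (p - q)%R <= k)%N.
Proof.
move=> pm ps qm qs; have := red_size (eq_leq ps) qm qs.
by rewrite (monic_top pm ps) scale1r.
Qed.

Definition OF (u : moments) (B : nat -> {poly C}) :=
  [/\ forall k, B k \is monic, forall k, size (B k) = k.+1,
      forall k j, (j < k)%N -> fapp u ('X^j * B k) = 0
    & forall k, fapp u ('X^k * B k) != 0].

Lemma orth_zero u B s (T : {poly C}) : OF u B -> (size T <= s)%N ->
  (forall j, (j < s)%N -> fapp u ('X^j * T) = 0) -> T = 0.
Proof.
case=> Bm Bs Bo Bn; elim: s T => [|s IH] T hT hO.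
  by apply/eqP; rewrite -size_poly_eq0 -leqn0.
have h1 : T - T`_s *: B s = 0.
  apply: IH; first exact: red_size.
  move=> j hj; rewrite mulrBr fappB -scalerAr fappZ Bo // hO ?mulr0 ?subr0 //.
  by apply: ltnW.
have hT' : T = T`_s *: B s by apply/eqP; rewrite -subr_eq0 h1.
have := hO s (ltnSn s); rewrite hT' -scalerAr fappZ => /eqP.
by rewrite mulf_eq0 (negbTE (Bn s)) orbF => /eqP ->; rewrite scale0r.
Qed.

Lemma OF_unique u B n (R : {poly C}) : OF u B -> R \is monic -> size R = n.+1 ->
  (forall j, (j < n)%N -> fapp u ('X^j * R) = 0) -> R = B n.
Proof.
move=> hB hm hs hO; have [Bm Bs Bo Bn] := hB.
apply/eqP; rewrite -subr_eq0; apply/eqP; apply: (orth_zero (s:=n) hB).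
  exact: sub_monic.
by move=> j hj; rewrite mulrBr fappB hO // Bo // subrr.
Qed.

Lemma OF_expand2 u B n (T : {poly C}) : OF u B -> (size T <= n.+2)%N ->
  (forall j, (j < n)%N -> fapp u ('X^j * T) = 0) ->
  exists c1 c0, T = c1 *: B n.+1 + c0 *: B n.
Proof.
move=> hB hs hO; have [Bm Bs Bo Bn] := hB.
set T1 := T - T`_n.+1 *: B n.+1.
have h1 : (size T1 <= n.+1)%N by apply: red_size.
set T2 := T1 - T1`_n *: B n.
have h2 : (size T2 <= n)%N by apply: red_size.
have h3 : T2 = 0.
  apply: (orth_zero hB h2) => j hj.
  rewrite /T2 /T1 !mulrBr !fappB -!scalerAr !fappZ hO // !Bo //.
    by rewrite !mulr0 !subr0.
  by apply: ltnW.
exists T`_n.+1, T1`_n.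
move/eqP: h3; rewrite /T2 subr_eq0 => /eqP <-.
by rewrite /T1 addrC subrK.
Qed.

Lemma orth_low u P : is_SMOP u P -> forall s k (q : {poly C}), (size q <= s)%N -> (s <= k)%N ->
  fapp u (q * P k) = 0.
Proof.
case=> Pm Ps Po Pn; elim=> [|s IH] k q hq hk.
  by move: hq; rewrite leqn0 size_poly_eq0 => /eqP ->; rewrite mul0r fapp0.
have hq' := red_size hq (Pm s) (Ps s).
have -> : q = (q - q`_s *: P s) + q`_s *: P s by rewrite subrK.
rewrite mulrDl fappD IH //; last by apply: ltnW.
rewrite -scalerAl fappZ Po ?mulr0 ?addr0 //.
by rewrite neq_ltn hk.
Qed.

Lemma SMOP_OF u P : is_SMOP u P -> OF u P.
Proof.
move=> hS; have [Pm Ps Po Pn] := hS; split=> //.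
  move=> k j hj; apply: (orth_low hS (s := j.+1)) => //.
  by rewrite size_polyXn.
move=> k.
have -> : 'X^k * P k = P k * P k - (P k - 'X^k) * P k.
  by rewrite mulrBl opprB addrC subrK.
rewrite fappB (orth_low hS (s := k) (q := P k - 'X^k)) ?subr0 //.
apply: sub_monic => //; [exact: monicXn | exact: size_polyXn].
Qed.

Definition Gf (u v : moments) (p : {poly C}) (j : nat) : C :=
  (if j == 0%N then p`_1 else 0) + (if j == 1%N then p`_0 else 0)
  - \sum_(s < j) v s * fapp u ('X^(j - s.+1) * p).

Lemma GB u v p q j : Gf u v (p - q) j = Gf u v p j - Gf u v q j.
Proof.
rewrite /Gf !coefB.
under eq_bigr => s _ do rewrite mulrBr fappB mulrBr.
rewrite sumrB; case: (j == 0%N); case: (j == 1%N); ring.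
Qed.

Lemma GZ u v c p j : Gf u v (c *: p) j = c * Gf u v p j.
Proof.
rewrite /Gf !coefZ.
under eq_bigr => s _ do rewrite -scalerAr fappZ mulrCA.
rewrite -mulr_sumr; case: (j == 0%N); case: (j == 1%N); ring.
Qed.

Lemma G1 u v j : is_inverse u v -> Gf u v 1 j = 0.
Proof.
move=> hinv; rewrite /Gf !coef1.
case: j => [|k]; first by rewrite big_ord0 /= !addr0 subr0.
under eq_bigr => s _ do rewrite mulr1 fappXn1.
rewrite (reindex_inj rev_ord_inj) /=.
have -> : \sum_(i < k.+1) v (k.+1 - i.+1)%N * u (k.+1 - (k.+1 - i.+1).+1)%N
          = \sum_(i < k.+1) u i * v (k - i)%N.
  apply: eq_bigr => i _; rewrite mulrC; have := ltn_ord i => hi.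
  by congr (u _ * v _); lia.
rewrite hinv; case: k => [|k] /=; ring.
Qed.

Lemma GX u v p j : Gf u v ('X * p) j = Gf u v p j.+1 + v j * fapp u p.
Proof.
rewrite /Gf !coefXM /= big_ord_recr /= subnn expr0 mul1r.
have -> : \sum_(s < j) v s * fapp u ('X^(j - s.+1) * ('X * p))
        = \sum_(s < j) v s * fapp u ('X^(j - s) * p).
  apply: eq_bigr => s _; rewrite mulrA -exprSr; congr (_ * fapp u ('X^_ * _)).
  have := ltn_ord s; lia.
rewrite if_same eqSS; under [in RHS]eq_bigr => i _ do rewrite subSS. case: (j == 0%N); ring.
Qed.

Lemma Gstep u v (A B Q PA PB PQ : {poly C}) c d :
  (forall j, u 0%N * fapp v ('X^j * A) = Gf u v PA j) ->
  (forall j, u 0%N * fapp v ('X^j * B) = Gf u v PB j) ->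
  Q = 'X * A - c *: A - d *: B -> PQ = 'X * PA - c *: PA - d *: PB ->
  fapp u PA = 0 ->
  forall j, u 0%N * fapp v ('X^j * Q) = Gf u v PQ j.
Proof.
move=> hA hB -> -> hu j.
rewrite !GB !GZ GX hu mulr0 addr0 -!hA -hB.
rewrite !mulrBr !fappB -!scalerAr !fappZ mulrA -exprSr; ring.
Qed.

Lemma assoc1_0 a b : assoc1 a b 0 = 1. Proof. by []. Qed.
Lemma assoc1_1 a b : assoc1 a b 1 = 'X - (b 1%N)%:P. Proof. by []. Qed.
Lemma assoc1SS a b n : assoc1 a b n.+2 =
  ('X - (b n.+2)%:P) * assoc1 a b n.+1 - a n.+2 *: assoc1 a b n.
Proof. by rewrite /assoc1 /=; case: (assoc1_aux a b n). Qed.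

Lemma TTRR_rec P a b n : TTRR P a b ->
  P n.+2 = 'X * P n.+1 - b n.+1 *: P n.+1 - a n.+1 *: P n.
Proof. by case=> _ _ h _; rewrite h; ring. Qed.

Lemma TTRR_1 P a b : TTRR P a b -> P 1%N = 'X * P 0%N - b 0%N *: P 0%N.
Proof. by case=> _ h _ _; rewrite h; ring. Qed.

Lemma keyG u v P a b : is_SMOP u P -> TTRR P a b -> is_inverse u v ->
  forall m j, u 0%N * fapp v ('X^j * assoc1 a b m) = Gf u v (P m.+1) j.
Proof.
move=> hS hT hinv; have [_ _ Po _] := SMOP_OF hS.
have hT' := hT; case: hT' => P0 _ _ _.
have uP : forall n, fapp u (P n.+1) = 0.
  by move=> n; have := Po n.+1 0%N (ltn0Sn n); rewrite expr0 mul1r.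
suff: forall m, (forall j, u 0%N * fapp v ('X^j * assoc1 a b m) = Gf u v (P m.+1) j)
  /\ (forall j, u 0%N * fapp v ('X^j * assoc1 a b m.+1) = Gf u v (P m.+2) j).
  by move=> h m; case: (h m).
have h0 : forall j, u 0%N * fapp v ('X^j * assoc1 a b 0) = Gf u v (P 1%N) j.
  move=> j; rewrite assoc1_0 mulr1 fappXn1 (TTRR_1 hT) P0 GB GZ GX !(G1 _ hinv).
  by rewrite fapp1; ring.
elim=> [|m [IH1 IH2]].
  split=> //; apply: (Gstep (B := 0) (PB := 1) (c := b 1%N) (d := a 1%N) h0).
  - by move=> j; rewrite mulr0 fapp0 mulr0 (G1 _ hinv).
  - by rewrite assoc1_1 assoc1_0 scaler0 subr0 mulr1 alg_polyC.
  - by rewrite (TTRR_rec 0 hT) P0.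
  - exact: uP.
split=> //; apply: (Gstep IH2 IH1 (c := b m.+2) (d := a m.+2)).
- by rewrite assoc1SS mulrBl mul_polyC.
- exact: (TTRR_rec m.+1 hT).
- exact: uP.
Qed.

Lemma keyV u v P a b : is_SMOP u P -> TTRR P a b -> is_inverse u v ->
  forall m j, (j <= m.+1)%N -> u 0%N * fapp v ('X^j * assoc1 a b m) =
    (if j == 0%N then (P m.+1)`_1 else 0) + (if j == 1%N then (P m.+1)`_0 else 0).
Proof.
move=> hS hT hinv m j hj; have [_ _ Po _] := SMOP_OF hS.
rewrite (keyG hS hT hinv) /Gf big1 ?subr0 // => s _.
rewrite Po ?mulr0 //; have := ltn_ord s; lia.
Qed.

Lemma wr0 (p q : {poly C}) : (wronsk p q).[0] = p`_0 * q`_1 - p`_1 * q`_0.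
Proof.
by rewrite /wronsk hornerD hornerN !hornerM !horner_coef0 !coef_deriv !mulr1n.
Qed.

Lemma u0_neq0 u P : is_SMOP u P -> P 0%N = 1 -> u 0%N != 0.
Proof.
move=> hS P0; have [_ _ _ Pn] := SMOP_OF hS.
by have := Pn 0%N; rewrite P0 expr0 mul1r fapp1.
Qed.

Lemma comb2 w (A B : {poly C}) l m j :
  fapp w ('X^j * (l *: A + m *: B)) = l * fapp w ('X^j * A) + m * fapp w ('X^j * B).
Proof. by rewrite mulrDr -!scalerAr fappD !fappZ. Qed.

Lemma comb3 w (A B E : {poly C}) c d j :
  fapp w ('X^j * (A + c *: B + d *: E)) =
  fapp w ('X^j * A) + c * fapp w ('X^j * B) + d * fapp w ('X^j * E).
Proof. by rewrite !mulrDr -!scalerAr !fappD !fappZ. Qed.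

Lemma ker2 (x1 y1 x2 y2 : C) : x1 * y2 - y1 * x2 = 0 ->
  exists l m : C, [/\ (l != 0) || (m != 0), l * x1 + m * x2 = 0 & l * y1 + m * y2 = 0].
Proof.
move=> h.
have [hx|hx] := boolP ((x2 != 0) || (x1 != 0)).
  exists x2, (- x1); split=> //; first by rewrite oppr_eq0.
    by ring.
  by rewrite -[RHS](oppr0) -h; ring.
move: hx; rewrite negb_or !negbK => /andP [/eqP hx2 /eqP hx1].
have [hy|hy] := boolP ((y2 != 0) || (y1 != 0)).
  exists y2, (- y1); split=> //; first by rewrite oppr_eq0.
    by rewrite hx1 hx2; ring.
  by ring.
move: hy; rewrite negb_or !negbK => /andP [/eqP hy2 /eqP hy1].
exists 1, 0; split; rewrite ?oner_neq0 //; rewrite ?hx1 ?hx2 ?hy1 ?hy2; ring.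
Qed.

Lemma mon3 (A B E : {poly C}) c d k : A \is monic -> size A = k.+1 ->
  (size B <= k)%N -> (size E <= k)%N ->
  size (A + c *: B + d *: E) = k.+1 /\ (A + c *: B + d *: E) \is monic.
Proof.
move=> Am As Bs Es; apply: mon_sz.
  move=> j hj; rewrite !coefD !coefZ (top_zero As hj) !nth_default ?mulr0 ?addr0 //.
    by apply: leq_trans Es (ltnW hj).
  by apply: leq_trans Bs (ltnW hj).
by rewrite !coefD !coefZ (monic_top Am As) !nth_default ?mulr0 ?addr0.
Qed.

Lemma P1_ms a b n : size (assoc1 a b n) = n.+1 /\ assoc1 a b n \is monic.
Proof.
suff: (size (assoc1 a b n) = n.+1 /\ assoc1 a b n \is monic) /\
      (size (assoc1 a b n.+1) = n.+2 /\ assoc1 a b n.+1 \is monic) by case.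
elim: n => [|n [[s0 m0] [s1 m1]]].
  split; first by rewrite assoc1_0 size_poly1 monic1.
  by rewrite assoc1_1 size_XsubC monicXsubC.
split=> //; apply: mon_sz.
  move=> j hj; rewrite assoc1SS coefB coefZ mulrBl coefB coefXM coefCM.
  case: j hj => // j hj /=.
  rewrite (top_zero s1 (j:=j)) ?(top_zero s1 (j:=j.+1)) ?(top_zero s0 (j:=j.+1)) //;
    try lia.
  by rewrite !mulr0 !subr0.
rewrite assoc1SS coefB coefZ mulrBl coefB coefXM coefCM /=.
by rewrite (monic_top m1 s1) (top_zero s1 (j:=n.+2)) ?(top_zero s0 (j:=n.+2)) // !mulr0 !subr0.
Qed.

Lemma kv2 u v P a b : is_SMOP u P -> TTRR P a b -> is_inverse u v ->
  forall m j, (2 <= j)%N -> (j <= m.+1)%N -> fapp v ('X^j * assoc1 a b m) = 0.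
Proof.
move=> hS hT hinv m j h2 hj.
have hu0 : u 0%N != 0 by apply: (u0_neq0 hS); case: hT.
have := keyV hS hT hinv hj; case: j h2 hj => [|[|j]] // _ _ /=.
by rewrite addr0 => /eqP; rewrite mulf_eq0 (negbTE hu0) => /eqP.
Qed.

Lemma alpha1SS P b n : alpha1 P b n.+2 =
  - ((wronsk (P n.+3) (P n.+1)).[0] / (wronsk (P n.+2) (P n.+1)).[0]).
Proof. by []. Qed.
Lemma alpha2SS P n : alpha2 P n.+2 =
  (wronsk (P n.+3) (P n.+2)).[0] / (wronsk (P n.+2) (P n.+1)).[0].
Proof. by []. Qed.

Lemma claim1a u v P Pm a b : is_SMOP u P -> TTRR P a b -> is_inverse u v ->
  is_SMOP v Pm -> forall n, (wronsk (P n.+2) (P n.+1)).[0] != 0.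
Proof.
move=> hS hT hinv hSm n; apply/negP => /eqP hD; rewrite wr0 in hD.
have hu0 : u 0%N != 0 by apply: (u0_neq0 hS); case: hT.
have [l [m [hlm e1 e2]]] := ker2 hD.
pose R : {poly C} := l *: assoc1 a b n.+1 + m *: assoc1 a b n.
have [s1 m1] := P1_ms a b n.+1; have [s0 m0] := P1_ms a b n.
have hR : R = 0.
  apply: (orth_zero (s := n.+2) (SMOP_OF hSm)).
    apply: leq_trans (size_polyD _ _) _; rewrite geq_max; apply/andP; split;
      apply: leq_trans (size_scale_leq _ _) _; by rewrite ?s1 ?s0.
  move=> j hj; apply: (mulfI hu0); rewrite mulr0 comb2 mulrDr !(mulrCA (u 0%N)).
  rewrite !(keyV hS hT hinv); try lia.
  by case: j hj => [|[|j]] hj /=; rewrite ?addr0 ?add0r ?mulr0 ?addr0.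
have := congr1 (fun p : {poly C} => p`_n.+1) hR; rewrite /= coefD !coefZ (monic_top m1 s1).
rewrite (top_zero s0 (ltnSn n)) coef0 mulr1 mulr0 addr0 => hl.
have := congr1 (fun p : {poly C} => p`_n) hR; rewrite /= coefD !coefZ (monic_top m0 s0).
rewrite hl coef0 mul0r add0r mulr1 => hm.
by move: hlm; rewrite hl hm eqxx.
Qed.

Lemma claim3 u v P Pm a b : is_SMOP u P -> TTRR P a b -> is_inverse u v ->
  is_SMOP v Pm -> forall n, Pm n.+2 = assoc1 a b n.+2
      + alpha1 P b n.+2 *: assoc1 a b n.+1 + alpha2 P n.+2 *: assoc1 a b n.
Proof.
move=> hS hT hinv hSm n.
have hu0 : u 0%N != 0 by apply: (u0_neq0 hS); case: hT.
have [s2 m2] := P1_ms a b n.+2; have [s1 m1] := P1_ms a b n.+1.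
have [s0 m0] := P1_ms a b n.
have hD := claim1a hS hT hinv hSm n; rewrite wr0 in hD.
pose R : {poly C} := assoc1 a b n.+2 + alpha1 P b n.+2 *: assoc1 a b n.+1
      + alpha2 P n.+2 *: assoc1 a b n.
have [hs hm] : size R = n.+3 /\ R \is monic.
  by apply: mon3; rewrite ?s1 ?s0.
symmetry; apply: (OF_unique (SMOP_OF hSm)) => // j hj.
apply: (mulfI hu0); rewrite mulr0 comb3 !mulrDr !(mulrCA (u 0%N)).
rewrite !(keyV hS hT hinv); try lia.
rewrite alpha1SS alpha2SS !wr0.
case: j hj => [|[|j]] hj /=; rewrite ?addr0 ?add0r ?mulr0 ?addr0 //; field; exact: hD.
Qed.

Lemma claim2 u v P Pm a b : is_SMOP u P -> TTRR P a b -> is_inverse u v ->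
  is_SMOP v Pm ->
  Pm 0%N = assoc1 a b 0 /\ Pm 1%N = assoc1 a b 1 + alpha1 P b 1 *: assoc1 a b 0.
Proof.
move=> hS hT hinv hSm.
have hu0 : u 0%N != 0 by apply: (u0_neq0 hS); case: hT.
have [s1 m1] := P1_ms a b 1; have [s0 m0] := P1_ms a b 0.
split.
  symmetry; apply: (OF_unique (SMOP_OF hSm)) => //.
pose R : {poly C} := assoc1 a b 1 + alpha1 P b 1 *: assoc1 a b 0 + 0 *: 0.
have [hs hm] : size R = 2 /\ R \is monic.
  by apply: mon3; rewrite ?s0 ?size_poly0.
rewrite /R scaler0 addr0 in hs hm.
symmetry; apply: (OF_unique (SMOP_OF hSm)) => // j hj.
have -> : j = 0%N by lia.
apply: (mulfI hu0); rewrite mulr0 mulrDr -scalerAr fappD fappZ mulrDr mulrCA.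
rewrite !(keyV hS hT hinv) //= (TTRR_rec 0 hT) (TTRR_1 hT).
have [P0 _ _ _] := hT; rewrite P0.
rewrite !(coefB, coefZ, coefXM, coef1) /=; ring.
Qed.

Lemma fvs (v : moments) j (q : {poly C}) :
  fapp (fun k => v (k + 2)%N) ('X^j * q) = fapp v ('X^(j.+2) * q).
Proof. by rewrite -(fappXn v 2) mulrA -exprD add2n. Qed.

Lemma OFw u v P Pm a b : is_SMOP u P -> TTRR P a b -> is_inverse u v ->
  is_SMOP v Pm -> OF (fun k => v (k + 2)%N) (assoc1 a b).
Proof.
move=> hS hT hinv hSm; split.
- by move=> k; case: (P1_ms a b k).
- by move=> k; case: (P1_ms a b k).
- by move=> k j hj; rewrite fvs (kv2 hS hT hinv) //; lia.
move=> k; rewrite fvs; apply/eqP => h0.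
have [_ _ _ Pn] := SMOP_OF hSm; have := Pn k.+2.
rewrite (claim3 hS hT hinv hSm) comb3 (kv2 hS hT hinv (m:=k.+2) (j:=k.+2)) // (kv2 hS hT hinv (m:=k.+1) (j:=k.+2)) // h0.
by rewrite !mulr0 !addr0 eqxx.
Qed.

Lemma claim1b u v P Pm a b : is_SMOP u P -> TTRR P a b -> is_inverse u v ->
  is_SMOP v Pm -> forall n, (wronsk (Pm n) (Pm n.+1)).[0] != 0.
Proof.
move=> hS hT hinv hSm n; apply/negP => /eqP hD; rewrite wr0 in hD.
have [l [m [hlm e1 e2]]] := ker2 hD.
have [Pmm Pms Pmo _] := SMOP_OF hSm.
pose S : {poly C} := l *: Pm n + m *: Pm n.+1.
have S0 : S`_0 = 0 by rewrite coefD !coefZ.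
have S1 : S`_1 = 0 by rewrite coefD !coefZ.
have htk : take_poly 2 S = 0.
  apply/polyP => i; rewrite coef_take_poly coef0.
  by case: i => [|[|i]] //=.
pose T := drop_poly 2 S.
have hSX : S = T * 'X^2 by have := poly_take_drop 2 S; rewrite htk add0r.
have sS : (size S <= n.+2)%N.
  apply: leq_trans (size_polyD _ _) _; rewrite geq_max; apply/andP; split;
    apply: leq_trans (size_scale_leq _ _) _; by rewrite Pms.
have sT : (size T <= n)%N by rewrite size_drop_poly leq_subLR add2n.
have hT0 : T = 0.
  apply: (orth_zero (s := n) (OFw hS hT hinv hSm) sT) => j hj.
  rewrite fvs -addn2 exprD -mulrA (mulrC 'X^2) -hSX comb2 !Pmo //; last lia.
  by rewrite !mulr0 addr0.
rewrite hT0 mul0r in hSX.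
have := congr1 (fun p : {poly C} => p`_n.+1) hSX; rewrite /= coefD !coefZ.
rewrite (monic_top (Pmm _) (Pms _)) (top_zero (Pms _) (ltnSn n)) coef0 mulr1 mulr0 add0r => hm.
have := congr1 (fun p : {poly C} => p`_n) hSX; rewrite /= coefD !coefZ.
rewrite (monic_top (Pmm _) (Pms _)) hm coef0 mulr1 mul0r addr0 => hl.
by move: hlm; rewrite hl hm eqxx.
Qed.

Lemma claim4 u v P Pm a b : is_SMOP u P -> TTRR P a b -> is_inverse u v ->
  is_SMOP v Pm -> forall n, 'X^2 * assoc1 a b n =
    Pm n.+2 + beta1 Pm n *: Pm n.+1 + beta0 Pm n *: Pm n.
Proof.
move=> hS hT hinv hSm n.
have [Pmm Pms Pmo _] := SMOP_OF hSm.
have [s0 m0] := P1_ms a b n.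
have [sX mX] : size ('X^2 * assoc1 a b n) = n.+3 /\ 'X^2 * assoc1 a b n \is monic.
  apply: mon_sz.
    move=> j hj; rewrite coefXnM; case: ifP => // _; apply: (top_zero s0); lia.
  by rewrite coefXnM /= subn2 /= (monic_top m0 s0).
pose T := 'X^2 * assoc1 a b n - Pm n.+2.
have sT : (size T <= n.+2)%N by apply: sub_monic.
have [c1 [c0 hT1]] : exists c1 c0, T = c1 *: Pm n.+1 + c0 *: Pm n.
  apply: (OF_expand2 (SMOP_OF hSm) sT) => j hj.
  rewrite mulrBr fappB mulrA -exprD addn2 (kv2 hS hT hinv) ?Pmo ?subr0 //; lia.
have E0 := congr1 (fun p : {poly C} => p`_0) hT1.
have E1 := congr1 (fun p : {poly C} => p`_1) hT1.
rewrite /= /T coefB coefXnM /= sub0r coefD !coefZ in E0.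
rewrite /= /T coefB coefXnM /= sub0r coefD !coefZ in E1.
have Eq0 : (Pm n.+2)`_0 = - (c1 * (Pm n.+1)`_0 + c0 * (Pm n)`_0) by rewrite -E0 opprK.
have Eq1 : (Pm n.+2)`_1 = - (c1 * (Pm n.+1)`_1 + c0 * (Pm n)`_1) by rewrite -E1 opprK.
have hD := claim1b hS hT hinv hSm n; rewrite wr0 in hD.
have hc0 : c0 = beta0 Pm n by rewrite /beta0 !wr0 Eq0 Eq1; field.
have hc1 : c1 = beta1 Pm n by rewrite /beta1 !wr0 Eq0 Eq1; field.
have -> : 'X^2 * assoc1 a b n = Pm n.+2 + T by rewrite /T addrC subrK.
by rewrite hT1 -hc0 -hc1 addrA.
Qed.

Ltac nateq := repeat match goal with
 | |- context [ (?x == ?y) ] =>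
   let T := type of x in unify T nat;
   let E := fresh "E" in
   first [ have E : (x == y) = true by (apply/eqP; lia)
         | have E : (x == y) = false by (apply/negbTE/eqP; lia) ];
   rewrite E; clear E
end.

Lemma sum_cut (F : nat -> {poly C}) n m : (n <= m)%N ->
  (forall k, (n <= k)%N -> F k = 0) -> \sum_(k < m) F k = \sum_(k < n) F k.
Proof.
move=> h hF; rewrite -(subnKC h); elim: (m - n)%N => [|d IH]; first by rewrite addn0.
by rewrite addnS big_ord_recr /= IH hF ?addr0 // leq_addr.
Qed.

Lemma sum_cutC (F : nat -> C) n m : (n <= m)%N ->
  (forall k, (n <= k)%N -> F k = 0) -> \sum_(k < m) F k = \sum_(k < n) F k.
Proof.
move=> h hF; rewrite -(subnKC h); elim: (m - n)%N => [|d IH]; first by rewrite addn0.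
by rewrite addnS big_ord_recr /= IH hF ?addr0 // leq_addr.
Qed.

Lemma sum_window (F : nat -> {poly C}) n K : (n + 5 <= K)%N ->
  (forall j, (j < n)%N -> F j = 0) -> (forall j, (n + 5 <= j)%N -> F j = 0) ->
  \sum_(j < K) F j = F n + F n.+1 + F n.+2 + F n.+3 + F n.+4.
Proof.
move=> hK h1 h2; rewrite (sum_cut hK h2).
have -> : (n + 5 = n.+4.+1)%N by lia.
rewrite !big_ord_recr /= big1 ?add0r // => i _; exact: h1.
Qed.

Definition band (A : infmx) := forall i j, (i.+3 <= j)%N -> A i j = 0.
Definition lband (A : infmx) := forall i j, (j.+3 <= i)%N -> A i j = 0.

Lemma row5 (X : infmx) (F : nat -> {poly C}) i K : band X -> lband X ->
  (i + 5 <= K)%N -> \sum_(j < K) X i j *: F j =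
   X i (i - 2)%N *: F (i - 2)%N + X i (i - 2).+1 *: F (i - 2).+1
   + X i (i - 2).+2 *: F (i - 2).+2 + X i (i - 2).+3 *: F (i - 2).+3
   + X i (i - 2).+4 *: F (i - 2).+4.
Proof.
move=> hb hl hK; rewrite (@sum_window (fun j => X i j *: F j) (i - 2)%N K) //.
- lia.
- by move=> j hj; rewrite hl ?scale0r //; lia.
- by move=> j hj; rewrite hb ?scale0r //; lia.
Qed.

Definition Mof (A B : infmx) : infmx := fun i j => \sum_(k < i.+3) A i k * B k j.

Definition rowrel (w : nat) (X : infmx) (F G : nat -> {poly C}) :=
  forall i K, (i + w <= K)%N -> \sum_(j < K) X i j *: F j = G i.

Lemma prod_M A B : band A -> mxprod_is A B (Mof A B).
Proof.
move=> hA i j; exists i.+3 => K hK.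
by rewrite (sum_cutC (F := fun k => A i k * B k j) hK) // => k hk; rewrite hA // mul0r.
Qed.

Lemma Mof0 A B : band B -> forall i j, (i + 5 <= j)%N -> Mof A B i j = 0.
Proof.
move=> hB i j hj; rewrite /Mof big1 // => k _; rewrite hB ?mulr0 //.
have := ltn_ord k; lia.
Qed.

Lemma comp_row A B F G H : band A -> rowrel 5 B F G -> rowrel 5 A G H ->
  rowrel 8 (Mof A B) F H.
Proof.
move=> hA hB hAr i K hK; rewrite /Mof.
under eq_bigr => j _ do rewrite scaler_suml.
rewrite exchange_big /= -(hAr i (i + 5)%N) //.
rewrite (sum_cut (F := fun k => A i k *: G k) (n := i.+3)); last first.
- by move=> k hk; rewrite hA ?scale0r.
- lia.
apply: eq_bigr => k _; rewrite -(hB k K); last by have := ltn_ord k; lia.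
by rewrite scaler_sumr; apply: eq_bigr => j _; rewrite scalerA.
Qed.

Lemma lift_row w X F G (p : {poly C}) : rowrel w X F G ->
  rowrel w X (fun k => p * F k) (fun k => p * G k).
Proof.
move=> h i K hK; rewrite -(h i K hK) mulr_sumr; apply: eq_bigr => j _.
by rewrite scalerAr.
Qed.

Lemma indep (F : nat -> {poly C}) : (forall k, F k \is monic) ->
  (forall k, size (F k) = k.+1) -> forall K (c : nat -> C),
  \sum_(j < K) c j *: F j = 0 -> forall j, (j < K)%N -> c j = 0.
Proof.
move=> Fm Fs; elim=> [|K IH] c h j hj //.
rewrite big_ord_recr /= in h.
have hK : c K = 0.
  have := congr1 (fun p : {poly C} => p`_K) h; rewrite /= coefD coef_sum coefZ.
  rewrite (monic_top (Fm K) (Fs K)) mulr1 coef0 big1 ?add0r // => i _.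
  by rewrite coefZ (top_zero (Fs i)) ?mulr0.
rewrite hK scale0r addr0 in h.
move: hj; rewrite ltnS leq_eqVlt => /orP [/eqP -> //|hj]; exact: IH.
Qed.

Lemma eq_rows (F : nat -> {poly C}) M1 M2 H : (forall k, F k \is monic) ->
  (forall k, size (F k) = k.+1) -> rowrel 8 M1 F H -> rowrel 8 M2 F H ->
  (forall i j, (i + 5 <= j)%N -> M1 i j = 0) ->
  (forall i j, (i + 5 <= j)%N -> M2 i j = 0) -> forall i j, M1 i j = M2 i j.
Proof.
move=> Fm Fs h1 h2 z1 z2 i j.
case: (ltnP j (i + 8)) => hj; last by rewrite z1 ?z2 //; lia.
apply/eqP; rewrite -subr_eq0; apply/eqP.
apply: (indep Fm Fs (K := (i + 8)%N) (c := fun j => M1 i j - M2 i j)) => //.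
under eq_bigr => k _ do rewrite scalerBl.
by rewrite sumrB h1 // h2 // subrr.
Qed.

Lemma band_jac c d : band (jacobi c d).
Proof. move=> i j h; rewrite /jacobi; nateq; done. Qed.
Lemma lband_jac c d : lband (jacobi c d).
Proof. move=> i j h; rewrite /jacobi; nateq; done. Qed.
Lemma band_L P b : band (Lmx P b).
Proof. move=> i j h; rewrite /Lmx; nateq; done. Qed.
Lemma lband_L P b : lband (Lmx P b).
Proof. move=> i j h; rewrite /Lmx; nateq; done. Qed.
Lemma band_U Pm : band (Umx Pm).
Proof. move=> i j h; rewrite /Umx; nateq; done. Qed.
Lemma lband_U Pm : lband (Umx Pm).
Proof. move=> i j h; rewrite /Umx; nateq; done. Qed.

Ltac win i hK := case: i hK => [|[|n]] _;
  [ have -> : (0 - 2 = 0)%N by []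
  | have -> : (1 - 2 = 0)%N by []
  | have -> : (n.+2 - 2 = n)%N by lia ].

Lemma rowJ1 a b : rowrel 5 (jacobi (fun n => b n.+1) (fun n => a n.+1)) (assoc1 a b)
  (fun k => 'X * assoc1 a b k).
Proof.
move=> i K hK; rewrite (@row5 _ _ i K (band_jac _ _) (lband_jac _ _) hK).
win i hK; rewrite /jacobi; nateq; rewrite !scale0r ?scale1r !addr0 ?add0r;
  [ rewrite assoc1_1 assoc1_0 | rewrite (assoc1SS a b 0) | rewrite (assoc1SS a b n.+1) ];
  rewrite -?mul_polyC ?assoc1_1 ?assoc1_0; ring.
Qed.

Lemma rowJm Pm am bm : TTRR Pm am bm ->
  rowrel 5 (jacobi bm am) Pm (fun k => 'X * Pm k).
Proof.
case=> _ h0 h1 _ i K hK; rewrite (@row5 _ _ i K (band_jac _ _) (lband_jac _ _) hK).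
win i hK; rewrite /jacobi; nateq; rewrite !scale0r ?scale1r !addr0 ?add0r;
  [ rewrite h0 | rewrite (h1 0%N) | rewrite (h1 n.+1) ]; rewrite -?mul_polyC; ring.
Qed.

Lemma rowL u v P Pm a b : is_SMOP u P -> TTRR P a b -> is_inverse u v ->
  is_SMOP v Pm -> rowrel 5 (Lmx P b) (assoc1 a b) Pm.
Proof.
move=> hS hT hinv hSm i K hK.
rewrite (@row5 _ _ i K (band_L _ _) (lband_L _ _) hK).
have [c0 c1] := claim2 hS hT hinv hSm.
win i hK; rewrite /Lmx; nateq; rewrite !scale0r ?scale1r !addr0 ?add0r;
  [ by rewrite c0 | by rewrite c1 addrC
  | by rewrite (claim3 hS hT hinv hSm n) -!mul_polyC; ring ].
Qed.

Lemma rowU u v P Pm a b : is_SMOP u P -> TTRR P a b -> is_inverse u v ->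
  is_SMOP v Pm -> rowrel 5 (Umx Pm) Pm (fun k => 'X^2 * assoc1 a b k).
Proof.
move=> hS hT hinv hSm i K hK.
rewrite (@row5 _ _ i K (band_U _) (lband_U _) hK).
win i hK; rewrite /Umx; nateq; rewrite !scale0r ?scale1r !addr0 ?add0r;
  rewrite (claim4 hS hT hinv hSm) -!mul_polyC; ring.
Qed.

Unset Implicit Arguments.

Lemma row_ext w X F G G' : (forall k, G k = G' k) -> rowrel w X F G -> rowrel w X F G'.
Proof. by move=> e h i K hK; rewrite -e; apply: h. Qed.

Lemma final_prod (A B A' B' : infmx) (F H : nat -> {poly C}) :
  (forall k, F k \is monic) -> (forall k, size (F k) = k.+1) ->
  band A -> band A' -> band B -> band B' ->
  rowrel 8 (Mof A B) F H -> rowrel 8 (Mof A' B') F H ->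
  exists M, mxprod_is A B M /\ mxprod_is A' B' M.
Proof.
move=> Fm Fs hA hA' hB hB' h1 h2; exists (Mof A B); split; first exact: (@prod_M A B hA).
have e := eq_rows Fm Fs h1 h2 (@Mof0 A B hB) (@Mof0 A' B' hB').
move=> i j; have [K hK] := @prod_M A' B' hA' i j; exists K => K' h; by rewrite hK // e.
Qed.

Theorem mainTheorem8 (u v : moments) (P Pm : nat -> {poly C})
  (a b am bm : nat -> C) :
  quasi_definite u -> is_SMOP u P -> TTRR P a b ->
  is_inverse u v ->
  quasi_definite v -> is_SMOP v Pm -> TTRR Pm am bm ->
  let P1 := assoc1 a b in
  let J1 := jacobi (fun n => b n.+1) (fun n => a n.+1) in
  let Jm := jacobi bm am in
  let L := Lmx P b in
  let U := Umx Pm in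
  ((forall n, (2 <= n)%N -> (wronsk (P n) (P n.-1)).[0] != 0) /\
   (forall n, (wronsk (Pm n) (Pm n.+1)).[0] != 0)) /\
  [/\ Pm 0%N = P1 0%N /\ Pm 1%N = P1 1%N + alpha1 P b 1 *: P1 0%N,
      (forall n, Pm n.+2 = P1 n.+2 + alpha1 P b n.+2 *: P1 n.+1
                           + alpha2 P n.+2 *: P1 n),
      (forall n, 'X^2 * P1 n = Pm n.+2 + beta1 Pm n *: Pm n.+1
                               + beta0 Pm n *: Pm n),
      (exists M, mxprod_is J1 J1 M /\ mxprod_is U L M)
    & (exists M, mxprod_is Jm Jm M /\ mxprod_is L U M)].
Proof.
move=> _ hS hT hinv _ hSm hTm P1 J1 Jm L U.
have P1m : forall k, P1 k \is monic by move=> k; case: (P1_ms a b k).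
have P1s : forall k, size (P1 k) = k.+1 by move=> k; case: (P1_ms a b k).
have [Pmm Pms _ _] := SMOP_OF hSm.
split; first split.
  by move=> [|[|n]] // _; exact: (claim1a hS hT hinv hSm n).
  exact: (claim1b hS hT hinv hSm).
split.
- exact: (claim2 hS hT hinv hSm).
- exact: (claim3 hS hT hinv hSm).
- exact: (claim4 hS hT hinv hSm).
- apply: (@final_prod _ _ _ _ _ (fun k => 'X^2 * P1 k) P1m P1s (band_jac _ _)
    (band_U _) (band_jac _ _) (band_L _ _)).
    apply: (@row_ext _ _ _ (fun k => 'X * ('X * P1 k))).
      by move=> k; rewrite mulrA -expr2.
    apply: (comp_row (band_jac _ _) (rowJ1 a b)).
    exact: (lift_row 'X (rowJ1 a b)).
  exact: (comp_row (band_U _) (rowL hS hT hinv hSm) (rowU hS hT hinv hSm)).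
- apply: (@final_prod _ _ _ _ _ (fun k => 'X^2 * Pm k) Pmm Pms (band_jac _ _)
    (band_L _ _) (band_jac _ _) (band_U _)).
    apply: (@row_ext _ _ _ (fun k => 'X * ('X * Pm k))).
      by move=> k; rewrite mulrA -expr2.
    apply: (comp_row (band_jac _ _) (rowJm hTm)).
    exact: (lift_row 'X (rowJm hTm)).
  apply: (comp_row (band_L _ _) (rowU hS hT hinv hSm)).
  exact: (lift_row 'X^2 (rowL hS hT hinv hSm)).
Qed.
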